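(* For all $k,n\in\mathbb{Z}\setminus\{0\}$ with $n\ge k$, \[ W_v(T_n^0)\ge W_k\big(T_n^0;W_v(T_k^0)\big)\quad\text{componentwise.}\]
   Context: Let $c\ge1$. Let $G,F$ be CDFs of strictly positive random variables $A$ (interarrival) and $V$ (service), $\lambda=1/E[A]$, $\mu=1/E[V]$, $\lambda<c\mu$. Let $\mathcal{T}^0=\{T_n^0:n\in\mathbb{Z}\setminus\{0\}\}$ be a time-stationary renewal point process with inter-renewal CDF $G$, indexed $\dots<T_{-1}^0<0<T_1^0<\dots$ (indices ordered naturally); $T_n^{0,+}$ is the next point after $T_n^0$, $A_n=T_n^{0,+}-T_n^0$. Let $\mathcal{T}^i=\{T_n^i\}$, $i=1,\dots,c$, be i.i.d. time-stationary renewal processes with inter-renewal CDF $F$, independent of $\mathcal{T}^0$; $V_k^i=T_k^{i,+}-T_k^i$. $U^i(t)=\inf\{T_n^i:T_n^i>t\}-t$, $U(t)=(U^1(t),\dots,U^c(t))$, $U(s_-)$ its left limit. $\mathcal{S}$ sorts a vector ascending; $x^+$ componentwise positive part; $\mathbf{1}=(1,\dots,1)$, $\mathbf{e}_1=(1,0,\dots,0)$. Vacation system: customers arrive at the points of $\mathcal{T}^0$ and wait in a FCFS queue; at each point $T_k^i$, if the queue is nonempty just before, the head customer leaves the queue and is served by server $i$ for time $V_k^i$, otherwise server $i$ takes a vacation of length $V_k^i$. Its stationary queue length is $Q_v(t)=\sup_{s\le t}\big(|(s,t]\cap\mathcal{T}^0|-\sum_{i=1}^c|(s,t]\cap\mathcal{T}^i|\big)$.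 $D_n^0$ is the delay of the customer arriving at $T_n^0$; he leaves the queue at a point $T_k^{i(n)}=T_n^0+D_n^0$ and his service time is $V_n:=V_k^{i(n)}$. $W_v(T_n^0)=D_n^0\mathbf{1}+\mathcal{S}(U((T_n^0+D_n^0)_-))$. For $k\le n$ and nonnegative ascending $w\in\mathbb{R}^c$: $W_k(T_k^0;w)=w$, $W_k(T_n^{0,+};w)=\mathcal{S}\big((W_k(T_n^0;w)+V_n\mathbf{e}_1-A_n\mathbf{1})^+\big)$. *)

(* Defs.v *)
From HB Require Import structures.
From mathcomp Require Import all_boot all_order all_algebra.
From mathcomp Require Import finmap.
From mathcomp Require Import all_classical all_reals all_analysis.
Set Implicit Arguments. Unset Strict Implicit. Unset Printing Implicit Defensive.
Import Order.TTheory GRing.Theory Num.Theory numFieldNormedType.Exports.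
Local Open Scope classical_set_scope.
Local Open Scope ring_scope.

Section QueueDefs.
Variable R : realType.

(* A point process indexed by Z \ {0}: P : int -> R, the value at 0 is unused. *)

Definition nxt (n : int) : int := if n == -1 then 1 else n + 1.

(* a locally finite point process with infinitely many points on both sides,
   indexed ... < T_{-1} < 0 < T_1 < ... *)
Definition point_process (P : int -> R) : Prop :=
  [/\ (forall j : int, j != 0 -> P j < P (nxt j)),
      P (-1) < 0 /\ 0 < P 1,
      (forall M : R, exists j : int, j != 0 /\ M < P j) &
      (forall M : R, exists j : int, j != 0 /\ P j < M)].

Definition cnt (P : int -> R) (s t : R) : nat :=
  #|` fset_set [set j : int | j != 0 /\ s < P j <= t] |%fset.

Definition cntS (c : nat) (Ts : 'I_c -> int -> R) (s t : R) : nat :=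
  (\sum_(i < c) cnt (Ts i) s t)%N.

Definition Qset (c : nat) (T0 : int -> R) (Ts : 'I_c -> int -> R) (t : R)
  : set R :=
  [set (cnt T0 s t)%:R - (cntS Ts s t)%:R | s in [set s | s <= t]].

(* stationary queue length of the vacation system *)
Definition Qv (c : nat) (T0 : int -> R) (Ts : 'I_c -> int -> R) (t : R) : R :=
  sup (Qset T0 Ts t).

Definition Ures (P : int -> R) (t : R) : R :=
  inf [set P j | j in [set j : int | j != 0 /\ t < P j]] - t.

Definition Uleft (P : int -> R) (s : R) : R :=
  lim (Ures P @ s^'-) : R.

Definition sortv (x : seq R) : seq R := sort <=%R x.

Definition Wv (c : nat) (T0 : int -> R) (Ts : 'I_c -> int -> R)
  (D : int -> R) (n : int) : seq R :=
  map (fun u => D n + u)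
    (sortv [seq Uleft (Ts i) (T0 n + D n) | i <- enum 'I_c]).

Definition step (w : seq R) (v a : R) : seq R :=
  let w1 := if w is x :: w' then (x + v) :: w' else [::] in
  sortv [seq Num.max (x - a) 0 | x <- w1].

Fixpoint Wrec (T0 : int -> R) (V : int -> R) (k : int) (w : seq R) (m : nat)
  : seq R :=
  match m with
  | 0%N => w
  | m'.+1 => let j := iter m' nxt k in
             step (Wrec T0 V k w m') (V j) (T0 (nxt j) - T0 j)
  end.

(* number of points of Z \ {0} strictly after k up to n (k <= n nonzero) *)
Definition nsteps (k n : int) : nat :=
  (absz (n - k)%R - ((k < 0)%R && (0 < n)%R))%N.

Definition Wk (T0 V : int -> R) (k : int) (w : seq R) (n : int) : seq R :=
  Wrec T0 V k w (nsteps k n).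

Definition vge (x y : seq R) : bool := all2 (fun a b => b <= a) x y.

(* D is the delay of the customer arriving at T_n^0, served by server i:
   he leaves the queue at the Q_v(T_n^0)-th service point after T_n^0
   (FCFS), which is a point of server i. *)
Definition is_delay (c : nat) (T0 : int -> R) (Ts : 'I_c -> int -> R)
  (n : int) (d : R) (i : 'I_c) : Prop :=
  0 <= d /\
  (exists j : int, j != 0 /\ Ts i j = T0 n + d) /\
  (cntS Ts (T0 n) (T0 n + d))%:R = Qv T0 Ts (T0 n).

End QueueDefs.

(* Main.v *)
Require Import Defs.
From HB Require Import structures.
From mathcomp Require Import all_boot all_order all_algebra.
From mathcomp Require Import finmap.
From mathcomp Require Import all_classical all_reals all_analysis.
From mathcomp Require Import zify lra.
Set Implicit Arguments. Unset Strict Implicit. Unset Printing Implicit Defensive.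
Import Order.TTheory GRing.Theory Num.Theory.
Local Open Scope classical_set_scope.
Local Open Scope ring_scope.



Fixpoint ins (R : realType) (a : R) (l : seq R) : seq R :=
  if l is x :: l' then (if a <= x then a :: l else x :: ins a l') else [:: a].
Definition isort (R : realType) (l : seq R) : seq R := foldr (@ins R) [::] l.

Lemma perm_ins (R : realType) (a : R) l : perm_eq (ins a l) (a :: l).
Proof.
elim: l => [|x l IH] //=; case: ifP => _ //.
apply: (@perm_trans _ (x :: a :: l)); first by rewrite perm_cons. by rewrite (perm_catCA [:: x] [:: a] l).
Qed.

Lemma path_ins (R : realType) (x0 a : R) l :
  x0 <= a -> path <=%R x0 l -> path <=%R x0 (ins a l).
Proof.
elim: l x0 => [|x l IH] x0 /= ha; first by rewrite ha.
move=> /andP[h1 h2]; case: ifP => hax /=.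
  by rewrite ha hax h2.
apply/andP; split => //; apply: IH => //; apply: ltW; by rewrite ltNge hax.
Qed.

Lemma sorted_ins (R : realType) (a : R) l : sorted <=%R l -> sorted <=%R (ins a l).
Proof.
case: l => [|x l] //= hp; case: ifP => hax /=; first by rewrite hax.
by apply: path_ins => //; apply: ltW; rewrite ltNge hax.
Qed.

Lemma ins_head (R : realType) (x : R) l : path <=%R x l -> ins x l = x :: l.
Proof. by case: l => [|z l] //= /andP[-> _]. Qed.

Lemma perm_isort (R : realType) (l : seq R) : perm_eq (isort l) l.
Proof.
elim: l => [|x l IH] //=; apply: (@perm_trans _ (x :: isort l)); first exact: perm_ins. by rewrite perm_cons.
Qed.

Lemma sorted_isort (R : realType) (l : seq R) : sorted <=%R (isort l).
Proof. by elim: l => [|x l IH] //=; apply: sorted_ins. Qed.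

Lemma sort_isort (R : realType) (l : seq R) : sort <=%R l = isort l.
Proof.
rewrite -[RHS](sorted_sort (@le_trans _ R) (sorted_isort l)).
by apply/perm_sort_leP; rewrite perm_sym perm_isort.
Qed.

Definition le2 (R : realType) (l m : seq R) := all2 (fun x y => x <= y) l m.

Arguments le2 : simpl never.
Lemma le2_cons (R : realType) (x y : R) l m : le2 (x :: l) (y :: m) = (x <= y) && le2 l m.
Proof. by []. Qed.
Lemma le2_nil (R : realType) : le2 [::] ([::] : seq R).
Proof. by []. Qed.

Lemma ins_mono (R : realType) (l m : seq R) (a b : R) :
  sorted <=%R l -> sorted <=%R m -> a <= b -> le2 l m -> le2 (ins a l) (ins b m).
Proof.
elim: l m a b => [|x l IH] [|y m] a b //= sl sm hab.
  by rewrite le2_cons hab.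
rewrite le2_cons => /andP[hxy hlm].
have sl' := path_sorted sl; have sm' := path_sorted sm.
case: ifP => hax; case: ifP => hby.
- by rewrite !le2_cons hab hxy.
- have hyb : y < b by rewrite ltNge hby.
  rewrite le2_cons (le_trans hax hxy) /= -(ins_head sl).
  by apply: IH => //; apply: le_trans hxy (ltW hyb).
- have hxa : x < a by rewrite ltNge hax.
  rewrite le2_cons (le_trans (ltW hxa) hab) /= -(ins_head sm).
  by apply: IH => //; apply: le_trans hab hby.
- by rewrite le2_cons hxy /=; apply: IH.
Qed.

Lemma isort_mono (R : realType) (l m : seq R) : le2 l m -> le2 (isort l) (isort m).
Proof.
elim: l m => [|x l IH] [|y m] //= /[!le2_cons] /andP[hxy hlm].
by apply: ins_mono => //; try apply: sorted_isort; apply: IH.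
Qed.

Lemma sort_mono (R : realType) (l m : seq R) : le2 l m -> le2 (sortv l) (sortv m).
Proof. by rewrite /sortv !sort_isort; apply: isort_mono. Qed.

Lemma vge_le2 (R : realType) (x y : seq R) : vge x y = le2 y x.
Proof. by elim: x y => [|a x IH] [|b y] //=; rewrite le2_cons -IH. Qed.

Lemma le2_trans (R : realType) (x y z : seq R) : le2 x y -> le2 y z -> le2 x z.
Proof.
elim: x y z => [|a x IH] [|b y] [|c z] //; rewrite !le2_cons => /andP[h1 h2] /andP[h3 h4].
by rewrite (le_trans h1 h3) (IH _ _ h2 h4).
Qed.

Lemma le2_refl (R : realType) (x : seq R) : le2 x x.
Proof. by elim: x => // a x IH; rewrite le2_cons IH lexx. Qed.

Lemma le2_map (R : realType) (T : Type) (f g : T -> R) (s : seq T) :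
  (forall i, f i <= g i) -> le2 (map f s) (map g s).
Proof. by move=> h; elim: s => // a s IH; rewrite /= le2_cons IH h. Qed.

Lemma max_mono (R : realType) (x y a : R) : x <= y -> Num.max (x - a) 0 <= Num.max (y - a) 0.
Proof. by move=> h; rewrite ge_max !le_max lexx orbT andbT lerD2r h. Qed.

Lemma step_mono (R : realType) (x y : seq R) v a :
  le2 x y -> le2 (step x v a) (step y v a).
Proof.
move=> hxy; apply: sort_mono.
case: x y hxy => [|x0 x] [|y0 y] //; rewrite le2_cons => /andP[h0 h].
rewrite /= le2_cons max_mono ?lerD2r //=.
elim: x y h => [|x1 x IH] [|y1 y] //; rewrite le2_cons => /andP[h1 h].
by rewrite /= le2_cons max_mono // IH.
Qed.



Lemma nxt_neq0 (j : int) : nxt j != 0.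
Proof. rewrite /nxt; case: ifP => /eqP h; lia. Qed.

Lemma nxt_gt (j : int) : j < nxt j.
Proof. rewrite /nxt; case: ifP => /eqP h; lia. Qed.

Lemma nxt_le (j k : int) : k != 0 -> j < k -> nxt j <= k.
Proof. rewrite /nxt; case: ifP => /eqP h; lia. Qed.

Lemma prv_ex (j : int) : j != 0 -> exists p, p != 0 /\ nxt p = j.
Proof.
move=> hj; case: (boolP (j == 1)) => [/eqP ->|h1].
  by exists (-1).
exists (j - 1); split; first lia.
rewrite /nxt; case: ifP => /eqP h; lia.
Qed.

Lemma pp_mono (R : realType) (P : int -> R) : point_process P ->
  forall i j, i != 0 -> j != 0 -> i < j -> P i < P j.
Proof.
move=> [hst _ _ _].
suff H : forall n : nat, forall i j, i != 0 -> j != 0 -> i < j -> j - i <= n%:Z -> P i < P j.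
  by move=> i j hi hj hij; apply: (H `|j - i|%N) => //; lia.
elim=> [|n IH] i j hi hj hij hn; first lia.
have [p [hp hpj]] := prv_ex hj.
have hip : i <= p.
  rewrite leNgt; apply/negP => hpi; have := nxt_le hi hpi; rewrite hpj; lia.
have hpj' : p < j by rewrite -hpj nxt_gt.
case: (boolP (i == p)) => [/eqP ->|hne]; first by rewrite -hpj hst.
apply: (lt_trans (IH i p hi hp _ _)); first lia; first lia.
by rewrite -hpj hst.
Qed.

Lemma pp_le (R : realType) (P : int -> R) : point_process P ->
  forall i j, i != 0 -> j != 0 -> i <= j -> P i <= P j.
Proof.
move=> hP i j hi hj; rewrite le_eqVlt => /orP[/eqP -> //|h].
exact/ltW/pp_mono.
Qed.

Lemma pp_inv (R : realType) (P : int -> R) : point_process P ->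
  forall i j, i != 0 -> j != 0 -> P i < P j -> i < j.
Proof.
move=> hP i j hi hj h; rewrite ltNge; apply/negP => hji.
by have := pp_le hP hj hi hji; rewrite leNgt h.
Qed.

Lemma pp_first (R : realType) (P : int -> R) (pr : R -> Prop) :
  point_process P -> (forall x y, x <= y -> pr x -> pr y) ->
  (exists j, j != 0 /\ pr (P j)) -> (exists j, j != 0 /\ ~ pr (P j)) ->
  exists jm, [/\ jm != 0, pr (P jm) & forall j, j != 0 -> pr (P j) -> P jm <= P j].
Proof.
move=> hP hup [j1 [hj1 p1]] [j0 [hj0 p0]].
have [jm [[hjm pm] hmin]] : exists jm, [set j | j != 0 /\ pr (P j)] jm /\
    forall k, [set j | j != 0 /\ pr (P j)] k -> jm <= k.
  apply: (@int_lbound_has_minimum _ j0); first by exists j1.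
  move=> j [hj pj]; apply: ltW; apply: (pp_inv hP) => //.
  rewrite ltNge; apply/negP => h; exact: p0 (hup _ _ h pj).
exists jm; split => // j hj pj; apply: (pp_le hP) => //; exact: hmin.
Qed.

Lemma pp_first_ge (R : realType) (P : int -> R) (s : R) : point_process P ->
  exists jm, [/\ jm != 0, s <= P jm & forall j, j != 0 -> s <= P j -> P jm <= P j].
Proof.
move=> hP; have [_ _ hup hlo] := hP.
apply: (pp_first (pr := fun x => s <= x)) => //.
- by move=> x y hxy hx; apply: le_trans hxy.
- by have [j [hj hj']] := hup s; exists j; split => //; apply: ltW.
- by have [j [hj hj']] := hlo s; exists j; split => // h; move: hj'; rewrite ltNge h.
Qed.

Lemma pp_first_gt (R : realType) (P : int -> R) (s : R) : point_process P ->
  exists jm, [/\ jm != 0, s < P jm & forall j, j != 0 -> s < P j -> P jm <= P j].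
Proof.
move=> hP; have [_ _ hup hlo] := hP.
apply: (pp_first (pr := fun x => s < x)) => //.
- by move=> x y hxy hx; exact: (lt_le_trans hx hxy).
- by have [j [hj hj']] := hlo s; exists j; split => // h; move: hj'; rewrite ltNge (ltW h).
Qed.



Lemma Ures_eq (R : realType) (P : int -> R) (t : R) (jf : int) :
  jf != 0 -> t < P jf -> (forall j, j != 0 -> t < P j -> P jf <= P j) ->
  Ures P t = P jf - t.
Proof.
move=> hjf ht hmin; rewrite /Ures; congr (_ - _).
set E := [set P j | j in _].
have EP : E (P jf) by exists jf.
apply/le_anti/andP; split.
  apply: (ge_inf (E := E)) => //; exists (P jf) => _ [j [hj hjt] <-]; exact: hmin.
by apply: lb_le_inf; [exists (P jf) | move=> _ [j [hj hjt] <-]; exact: hmin].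
Qed.

Lemma Uleft_eq (R : realType) (P : int -> R) (s : R) (jg : int) :
  point_process P ->
  jg != 0 -> s <= P jg -> (forall j, j != 0 -> s <= P j -> P jg <= P j) ->
  Uleft P s = P jg - s.
Proof.
move=> hP hjg hs hmin.
have [p [hp hpj]] := prv_ex hjg.
have hps : P p < s.
  rewrite ltNge; apply/negP => h; have := hmin p hp h.
  by rewrite -hpj leNgt (pp_mono hP hp (nxt_neq0 p) (nxt_gt p)).
have hnear : {near s^'-, (fun t => P jg - t) =1 Ures P}.
  near=> t.
  have ht1 : P p < t by near: t; exact: nbhs_left_gt.
  have ht2 : t < s by near: t; exact: nbhs_left_lt.
  apply/esym/Ures_eq => //; first exact: lt_le_trans hs.
  move=> j hj htj; apply: (pp_le hP) => //; rewrite -hpj; apply: nxt_le => //.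
  by apply: (pp_inv hP) => //; exact: lt_trans htj.
have hc : Ures P x @[x --> s^'-] --> P jg - s.
  apply: cvg_trans (near_eq_cvg hnear) _.
  apply: cvg_at_left_filter; apply: cvgB; [exact: cvg_cst | exact: cvg_id].
rewrite /Uleft; exact: (norm_cvg_lim hc).
Unshelve. all: by end_near.
Qed.



Lemma cnt_fin (R : realType) (P : int -> R) (r t : R) : point_process P ->
  finite_set [set j : int | j != 0 /\ r < P j <= t].
Proof.
move=> hP; have [_ _ hup hlo] := hP.
have [j0 [hj0 h0]] := hlo r; have [j1 [hj1 h1]] := hup t.
apply: (sub_finite_set _ (finite_seq [seq j0 + (k%:Z) | k <- iota 0 `|j1 - j0|%N])).
move=> j /= [hj /andP[hrj hjt]].
have a1 : j0 < j by apply: (pp_inv hP) => //; exact: lt_trans hrj.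
have a2 : j < j1 by apply: (pp_inv hP) => //; exact: le_lt_trans h1.
apply/mapP; exists `|j - j0|%N; last lia.
rewrite mem_iota; lia.
Qed.

Lemma cnt_add (R : realType) (P : int -> R) (r a b : R) : point_process P ->
  r <= a -> a <= b -> cnt P r b = (cnt P r a + cnt P a b)%N.
Proof.
move=> hP hra hab; rewrite /cnt.
have -> : [set j : int | j != 0 /\ r < P j <= b] =
   [set j : int | j != 0 /\ r < P j <= a] `|` [set j : int | j != 0 /\ a < P j <= b].
  apply/seteqP; split => j /=.
    move=> [hj /andP[h1 h2]]; case: (leP (P j) a) => h3; [left|right]; split => //; by apply/andP; split.
  move=> [] [hj /andP[h1 h2]]; split => //; apply/andP; split.
  - exact: h1.
  - exact: le_trans hab.
  - exact: le_lt_trans h1.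
  - exact: h2.
rewrite fset_setU; try exact: cnt_fin.
rewrite cardfsU -fset_setI; try exact: cnt_fin.
have -> : [set j : int | j != 0 /\ r < P j <= a] `&` [set j : int | j != 0 /\ a < P j <= b] = set0.
  apply/seteqP; split => j //= [[_ /andP[_ h1]] [_ /andP[h2 _]]].
  by move: h1; rewrite leNgt h2.
by rewrite fset_set0 cardfs0 subn0.
Qed.

Lemma cnt_one (R : realType) (P : int -> R) (n : int) : point_process P -> n != 0 ->
  cnt P (P n) (P (nxt n)) = 1%N.
Proof.
move=> hP hn; rewrite /cnt.
have -> : [set j : int | j != 0 /\ P n < P j <= P (nxt n)] = [set nxt n].
  apply/seteqP; split => j /=.
    move=> [hj /andP[h1 h2]].
    have a1 : nxt n <= j by apply: nxt_le => //; exact: (pp_inv hP).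
    have a2 : j <= nxt n.
      rewrite leNgt; apply/negP => h; have := pp_mono hP (nxt_neq0 n) hj h.
      by rewrite ltNge h2.
    by apply/le_anti; rewrite a1 a2.
  move=> ->; split; first exact: nxt_neq0.
  by rewrite lexx andbT; apply: (pp_mono hP) => //; [exact: nxt_neq0 | exact: nxt_gt].
by rewrite fset_set1 cardfs1.
Qed.

Lemma cntS_add (R : realType) (c : nat) (Ts : 'I_c -> int -> R) (r a b : R) :
  (forall i, point_process (Ts i)) ->
  r <= a -> a <= b -> cntS Ts r b = (cntS Ts r a + cntS Ts a b)%N.
Proof.
move=> hP hra hab; rewrite /cntS -big_split /=; apply: eq_bigr => i _.
exact: cnt_add.
Qed.



Lemma Qv_step (R : realType) (c : nat) (T0 : int -> R) (Ts : 'I_c -> int -> R) (n : int) :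
  point_process T0 -> (forall i, point_process (Ts i)) ->
  (forall t, has_ubound (Qset T0 Ts t)) -> n != 0 ->
  Qv T0 Ts (T0 n) + 1 <= Qv T0 Ts (T0 (nxt n)) + (cntS Ts (T0 n) (T0 (nxt n)))%:R.
Proof.
move=> h0 hS hub hn.
set a := T0 n; set b := T0 (nxt n).
have hab : a < b by apply: (pp_mono h0) => //; [exact: nxt_neq0 | exact: nxt_gt].
suff : Qv T0 Ts a <= Qv T0 Ts b + (cntS Ts a b)%:R - 1 by lra.
apply: ge_sup.
  by exists ((cnt T0 a a)%:R - (cntS Ts a a)%:R); exists a => /=.
move=> _ [r /= hr <-].
have : Qset T0 Ts b ((cnt T0 r b)%:R - (cntS Ts r b)%:R) by exists r => //=; apply: le_trans hr (ltW hab).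
move=> /(ub_le_sup (hub b)).
rewrite (cnt_add h0 hr (ltW hab)) (cntS_add hS hr (ltW hab)) (cnt_one h0 hn).
rewrite !natrD; rewrite /Qv; lra.
Qed.

Lemma delay_lt (R : realType) (c : nat) (T0 : int -> R) (Ts : 'I_c -> int -> R)
  (D : int -> R) (srv : int -> 'I_c) (n : int) :
  point_process T0 -> (forall i, point_process (Ts i)) ->
  (forall t, has_ubound (Qset T0 Ts t)) ->
  (forall n : int, n != 0 -> is_delay T0 Ts n (D n) (srv n)) -> n != 0 ->
  T0 n + D n < T0 (nxt n) + D (nxt n).
Proof.
move=> h0 hS hub hD hn.
have [hd0 [_ hq0]] := hD n hn.
have [hd1 [_ hq1]] := hD (nxt n) (nxt_neq0 n).
have hst := Qv_step h0 hS hub hn.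
set a := T0 n in hd0 hq0 hst *; set b := T0 (nxt n) in hd1 hq1 hst *.
have hab : a < b by apply: (pp_mono h0) => //; [exact: nxt_neq0 | exact: nxt_gt].
rewrite ltNge; apply/negP => hle.
have e1 : cntS Ts a (a + D n) = (cntS Ts a (b + D (nxt n)) + cntS Ts (b + D (nxt n)) (a + D n))%N.
  apply: cntS_add => //; lra.
have e2 : cntS Ts a (b + D (nxt n)) = (cntS Ts a b + cntS Ts b (b + D (nxt n)))%N.
  apply: cntS_add => //; lra.
rewrite e1 e2 !natrD in hq0.
have := ler0n R (cntS Ts (b + D (nxt n)) (a + D n)).
lra.
Qed.



Lemma iter_formula (m : nat) (k : int) : k != 0 ->
  iter m nxt k = if (k < 0) && (- k <= m%:Z) then k + m%:Z + 1 else k + m%:Z.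
Proof.
move=> hk; elim: m => [|m IH].
  rewrite /=; case: ifP => /=; lia.
rewrite iterS IH /nxt; repeat case: ifP; intros; lia.
Qed.

Lemma iter_neq0 (m : nat) (k : int) : k != 0 -> iter m nxt k != 0.
Proof. by case: m => [|m] //= _; exact: nxt_neq0. Qed.

Lemma iter_nsteps (k n : int) : k != 0 -> n != 0 -> k <= n ->
  iter (nsteps k n) nxt k = n.
Proof.
move=> hk hn hkn; rewrite iter_formula // /nsteps.
case hk0: (k < 0); case hn0: (0 < n) => /=; repeat case: ifP; intros; lia.
Qed.



Lemma one_step (R : realType) (c : nat) (T0 : int -> R) (Ts : 'I_c -> int -> R)
  (D : int -> R) (srv : int -> 'I_c) :
  (0 < c)%N ->
  point_process T0 ->
  (forall i, point_process (Ts i)) ->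
  (forall i i' j j', i != i' -> j != 0 -> j' != 0 -> Ts i j != Ts i' j') ->
  (forall t, has_ubound (Qset T0 Ts t)) ->
  (forall n : int, n != 0 -> is_delay T0 Ts n (D n) (srv n)) ->
  forall n : int, n != 0 ->
  le2 (step (Wv T0 Ts D n) (Ures (Ts (srv n)) (T0 n + D n)) (T0 (nxt n) - T0 n))
      (Wv T0 Ts D (nxt n)).
Proof.
move=> hc h0 hS hdS hub hD n hn.
have hss := delay_lt h0 hS hub hD hn.
have [hD0 [[jn [hjn hjns]] _]] := hD n hn.
have [hD1 _] := hD (nxt n) (nxt_neq0 n).
rewrite /Wv.
set s := T0 n + D n in hss hjns *.
set s' := T0 (nxt n) + D (nxt n) in hss *.
set i0 := srv n in hjns *.
pose u i := Uleft (Ts i) s.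
pose y i := D n + Ures (Ts i) s.
have hu0 : forall i, 0 <= u i.
  move=> i; have [jg [hjg hsg hmin]] := pp_first_ge s (hS i).
  rewrite /u (Uleft_eq (hS i) hjg hsg hmin); lra.
have hui0 : u i0 = 0.
  have [jg [hjg hsg hmin]] := pp_first_ge s (hS i0).
  rewrite /u (Uleft_eq (hS i0) hjg hsg hmin).
  have := hmin jn hjn; rewrite hjns lexx => /(_ isT); lra.
have huy : forall i, i != i0 -> D n + u i = y i.
  move=> i hi; have [jg [hjg hsg hmin]] := pp_first_ge s (hS i).
  rewrite /u /y (Uleft_eq (hS i) hjg hsg hmin).
  have hne : Ts i jg != s by rewrite -hjns; exact: hdS.
  have hlt : s < Ts i jg by rewrite lt_neqAle eq_sym hne hsg.
  rewrite (Ures_eq hjg hlt) // => j hj hsj; apply: hmin => //; exact: ltW.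
have hyd : forall i, Num.max (y i - (T0 (nxt n) - T0 n)) 0 <= D (nxt n) + Uleft (Ts i) s'.
  move=> i; have [jf [hjf hsf hminf]] := pp_first_gt s (hS i).
  have [jg [hjg hsg hming]] := pp_first_ge s' (hS i).
  rewrite /y (Ures_eq hjf hsf hminf) (Uleft_eq (hS i) hjg hsg hming).
  have hfg : Ts i jf <= Ts i jg by apply: hminf => //; exact: lt_le_trans hsg.
  rewrite ge_max; apply/andP; split; rewrite /s /s' in hsg hfg *; lra.
have -> : [seq Uleft (Ts i) s | i <- enum 'I_c] = map u (enum 'I_c) by [].
rewrite /sortv (map_sort (leT' := <=%R) (fun x y => lerD2l (D (nxt n)) x y)).
rewrite -(map_comp (fun x => D (nxt n) + x) (fun i => Uleft (Ts i) s')).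
have hsz : size (sort <=%R (map u (enum 'I_c))) = c by rewrite size_sort size_map size_enum_ord.
case E: (sort <=%R (map u (enum 'I_c))) hsz => [|h t] hsz; first by rewrite -hsz in hc.
have p1 : perm_eq (h :: t) (map u (enum 'I_c)) by rewrite -E perm_sort.
have hsorted : sorted <=%R (h :: t) by rewrite -E sort_sorted //; exact: le_total.
have hh : h = 0.
  apply/le_anti/andP; split.
    have : u i0 \in h :: t by rewrite (perm_mem p1); apply: map_f; rewrite mem_enum.
    rewrite inE => /orP[/eqP <-|hin]; first by rewrite hui0.
    have := order_path_min (@le_trans _ R) hsorted => /allP /(_ _ hin); by rewrite hui0.
  have : h \in map u (enum 'I_c) by rewrite -(perm_mem p1) mem_head.
  by move=> /mapP[i _ ->].
have hin0 : i0 \in enum 'I_c by rewrite mem_enum.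
have p2 := perm_to_rem hin0.
have p3 : perm_eq t (map u (rem i0 (enum 'I_c))).
  rewrite -(perm_cons h); apply: (perm_trans p1).
  by rewrite hh -hui0 -map_cons; apply: perm_map.
have hperm : perm_eq ((D n + h + Ures (Ts i0) s) :: map (fun u => D n + u) t) (map y (enum 'I_c)).
  apply: (@perm_trans _ (y i0 :: map y (rem i0 (enum 'I_c)))); last first.
    by rewrite perm_sym -map_cons; apply: perm_map.
  rewrite hh addr0 /y perm_cons.
  apply: (@perm_trans _ (map (fun u => D n + u) (map u (rem i0 (enum 'I_c))))).
    exact: perm_map.
  rewrite -map_comp.
  suff -> : map ((fun x => D n + x) \o u) (rem i0 (enum 'I_c)) =
     map (fun i => D n + Ures (Ts i) s) (rem i0 (enum 'I_c)) by [].
  apply/eq_in_map => i.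
  rewrite (mem_rem_uniq _ (enum_uniq _)) inE => /andP[hi _] /=.
  exact: huy.
rewrite /step /= -/(sortv _).
have -> : sortv [seq Num.max (x - (T0 (nxt n) - T0 n)) 0 | x <- (D n + h + Ures (Ts i0) s) :: map (fun u => D n + u) t]
   = sortv [seq Num.max (x - (T0 (nxt n) - T0 n)) 0 | x <- map y (enum 'I_c)].
  by apply/perm_sort_leP; apply: perm_map.
apply: sort_mono; rewrite -map_comp; apply: le2_map => i /=; exact: hyd.
Qed.



Unset Implicit Arguments. Set Strict Implicit. Set Printing Implicit Defensive.

Theorem lemma2 (R : realType) (c : nat) (T0 : int -> R) (Ts : 'I_c -> int -> R)
  (D : int -> R) (srv : int -> 'I_c) :
  (0 < c)%N ->
  point_process T0 ->
  (forall i, point_process (Ts i)) ->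
  (* a.s. no common points between distinct processes *)
  (forall i j j', j != 0 -> j' != 0 -> T0 j != Ts i j') ->
  (forall i i' j j', i != i' -> j != 0 -> j' != 0 -> Ts i j != Ts i' j') ->
  (* stability: Q_v(t) is finite *)
  (forall t, has_ubound (Qset T0 Ts t)) ->
  (* D_n^0 is the delay of customer n, who is served by server srv n *)
  (forall n : int, n != 0 -> is_delay T0 Ts n (D n) (srv n)) ->
  forall k n : int, k != 0 -> n != 0 -> k <= n ->
    vge (Wv T0 Ts D n)
        (Wk T0 (fun m => Ures (Ts (srv m)) (T0 m + D m)) k (Wv T0 Ts D k) n).
Proof.
move=> hc h0 hS h0S hdS hub hD k n hk hn hkn.
suff H : forall m, le2 (Wrec T0 (fun m => Ures (Ts (srv m)) (T0 m + D m)) k (Wv T0 Ts D k) m)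
                       (Wv T0 Ts D (iter m nxt k)).
  by rewrite vge_le2 /Wk; have := H (nsteps k n); rewrite iter_nsteps.
elim=> [|m IH]; first exact: le2_refl.
rewrite [iter m.+1 _ _]iterS /=.
apply: le2_trans (step_mono _ _ IH) _.
exact: (one_step hc h0 hS hdS hub hD (iter_neq0 m hk)).
Qed.
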